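(* Let $\mathfrak{X}=(X,\{R_0,R_1,R_2,R_3,R_4\})$ be a skew-symmetric $4$-class association scheme with $R_1^\top=R_2$ and $R_3^\top=R_4$, and suppose that the character table of $\mathfrak X$ is of type $1$ or of type $2$ (in the sense described in the context). Then for each $i\in\{1,2\}$ the digraph $(X,R_i\cup R_{i+2})$ has $5$ distinct eigenvalues.
   Context: An association scheme on a finite set $X$ is a partition of $X\times X$ into relations $R_0$ (diagonal), $R_1,\dots,R_d$ closed under transposition, with constant intersection numbers; skew-symmetric means $R_0$ is the only symmetric relation. Schemes with $\le4$ classes are commutative; the Bose–Mesner algebra (span of the $01$ adjacency matrices $A_i$) has primitive idempotents $E_j$ with $A_iE_j=p_i(j)E_j$, and the character table $P$ has $(j,i)$-entry $p_i(j)$. The symmetrization $\tilde{\mathfrak X}=(X,\{R_0,R_1\cup R_2,R_3\cup R_4\})$ is a $2$-class scheme; write its character table (rows $\tilde E_0,\tilde E_1,\tilde E_2$, columns $R_0,R_1\cup R_2,R_3\cup R_4$) as $(1,k_1,k_2)$, $(1,r_1,t_1)$, $(1,r_2,t_2)$, with multiplicities $1,m_1,m_2$ ($m_j=\operatorname{rank}\tilde E_j$), and $n=|X|=1+k_1+k_2$. It is known that the primitive idempotents $E_0,\dots,E_4$ of $\mathfrak X$ can be ordered so that the character table of $\mathfrak X$ (columns $A_0,\dots,A_4$) has rows $(1,k_1/2,k_1/2,k_2/2,k_2/2)$, $(1,\rho,\bar\rho,\tau,\bar\tau)$, $(1,\sigma,\bar\sigma,\omega,\bar\omega)$, $(1,\bar\sigma,\sigma,\bar\omega,\omega)$,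 $(1,\bar\rho,\rho,\bar\tau,\tau)$ with multiplicities $1,m_1/2,m_1/2,m_2/2,m_2/2$, and one of the following holds. Type 1: $\rho=r_1/2$, $\sigma=(r_2+\sqrt{-b})/2$, $\tau=(t_1+\sqrt{-z})/2$, $\omega=t_2/2$ with $b=nk_1/m_2$, $z=nk_2/m_1$. Type 2: $\rho=(r_1+\sqrt{-y})/2$, $\sigma=r_2/2$, $\tau=t_1/2$, $\omega=(t_2+\sqrt{-c})/2$ with $y=nk_1/m_1$, $c=nk_2/m_2$. Type 3: $\rho=(r_1+\sqrt{-y})/2$, $\tau=(t_1+\sqrt{-z})/2$, $\sigma=(r_2+\sqrt{-b})/2$, $\omega=(t_2-\sqrt{-c})/2$ with $b,c,y,z>0$. Eigenvalues of a digraph $(X,R)$ are those of its $01$ adjacency matrix. *)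

(* Defs.v *)
From HB Require Import structures.
From mathcomp Require Import all_boot all_order all_algebra algC.
Set Implicit Arguments. Unset Strict Implicit. Unset Printing Implicit Defensive.
Import Order.TTheory GRing.Theory Num.Theory.
Local Open Scope ring_scope.

(* A 4-class scheme on X = 'I_n is given by the map [rel] sending (x,y) to the
   index i of the relation R_i containing (x,y). *)

Definition I0 : 'I_5 := inord 0.
Definition I1 : 'I_5 := inord 1.
Definition I2 : 'I_5 := inord 2.
Definition I3 : 'I_5 := inord 3.
Definition I4 : 'I_5 := inord 4.
Definition J0 : 'I_3 := inord 0.
Definition J1 : 'I_3 := inord 1.
Definition J2 : 'I_3 := inord 2.

Section Defs.
Variables (n d : nat).
Implicit Types (rel : 'I_n -> 'I_n -> 'I_d.+1).

Definition Rel rel (i : 'I_d.+1) : 'I_n -> 'I_n -> bool := fun x y => rel x y == i.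

Definition is_assoc_scheme rel : Prop :=
  [/\ (forall i, exists x y, rel x y = i),
      (forall x y, (rel x y == ord0) = (x == y)),
      (forall i, exists j, forall x y, Rel rel i x y = Rel rel j y x)
    & (forall i j k, exists p : nat, forall x y, rel x y = k ->
         #|[set z | Rel rel i x z && Rel rel j z y]| = p)].

Definition skew_symmetric rel : Prop :=
  forall i, i != ord0 -> ~ (forall x y, Rel rel i x y = Rel rel i y x).

Definition adj_mx (R : 'I_n -> 'I_n -> bool) : 'M[algC]_n :=
  \matrix_(x, y) (R x y)%:R.

Definition adj rel (i : 'I_d.+1) : 'M[algC]_n := adj_mx (Rel rel i).

Definition in_span m (B : 'I_m -> 'M[algC]_n) (M : 'M[algC]_n) : Prop :=
  exists c : 'I_m -> algC, M = \sum_(k < m) c k *: B k.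

Definition prim_idem m (B : 'I_m -> 'M[algC]_n) (E : 'M[algC]_n) : Prop :=
  [/\ in_span B E, E *m E = E, E != 0 &
      forall F, in_span B F -> F *m F = F -> F *m E = F -> F = 0 \/ F = E].

Definition prim_idem_family m k (B : 'I_m -> 'M[algC]_n) (E : 'I_k -> 'M[algC]_n) : Prop :=
  [/\ (forall j, prim_idem B (E j)),
      (forall j j', j != j' -> E j *m E j' = 0)
    & \sum_(j < k) E j = 1%:M].

Definition has_char_table m k (B : 'I_m -> 'M[algC]_n) (E : 'I_k -> 'M[algC]_n)
    (P : 'I_k -> 'I_m -> algC) : Prop :=
  forall j i, B i *m E j = P j i *: E j.

Definition num_distinct_eigenvalues_eq (M : 'M[algC]_n) (N : nat) : Prop :=
  exists s : seq algC, [/\ uniq s, size s = N & forall a, eigenvalue M a = (a \in s)].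

End Defs.

Definition tab_of (rows : seq (seq algC)) {m k : nat} : 'I_k -> 'I_m -> algC :=
  fun j i => nth 0 (nth [::] rows j) i.

Definition sym_adj n (rel : 'I_n -> 'I_n -> 'I_5) (i : 'I_3) : 'M[algC]_n :=
  match val i with
  | 0%N => adj rel I0
  | 1%N => adj rel I1 + adj rel I2
  | _ => adj rel I3 + adj rel I4
  end.

Definition sym_table (k1 k2 r1 t1 r2 t2 : algC) : 'I_3 -> 'I_3 -> algC :=
  tab_of [:: [:: 1; k1; k2]; [:: 1; r1; t1]; [:: 1; r2; t2]].

Definition scheme_table (k1 k2 rho sigma tau omega : algC) : 'I_5 -> 'I_5 -> algC :=
  tab_of [:: [:: 1; k1 / 2; k1 / 2; k2 / 2; k2 / 2];
             [:: 1; rho; rho^*; tau; tau^*];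
             [:: 1; sigma; sigma^*; omega; omega^*];
             [:: 1; sigma^*; sigma; omega^*; omega];
             [:: 1; rho^*; rho; tau^*; tau]].

Definition type1_cond (n : nat) (k1 k2 r1 t1 r2 t2 : algC) (m1 m2 : nat)
    (rho sigma tau omega : algC) : Prop :=
  let b := n%:R * k1 / m2%:R in let z := n%:R * k2 / m1%:R in
  [/\ rho = r1 / 2, sigma = (r2 + sqrtC (- b)) / 2,
      tau = (t1 + sqrtC (- z)) / 2 & omega = t2 / 2].

Definition type2_cond (n : nat) (k1 k2 r1 t1 r2 t2 : algC) (m1 m2 : nat)
    (rho sigma tau omega : algC) : Prop :=
  let y := n%:R * k1 / m1%:R in let c := n%:R * k2 / m2%:R in
  [/\ rho = (r1 + sqrtC (- y)) / 2, sigma = r2 / 2,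
      tau = t1 / 2 & omega = (t2 + sqrtC (- c)) / 2].

(* The character table of the scheme is of the type given by [cond]:
   the symmetrization has (in some ordering of its primitive idempotents)
   character table rows (1,k1,k2),(1,r1,t1),(1,r2,t2) with multiplicities
   1,m1,m2, and the primitive idempotents of the scheme can be ordered so
   that its character table is [scheme_table] with multiplicities
   1,m1/2,m1/2,m2/2,m2/2 and rho,sigma,tau,omega satisfying [cond]. *)
Definition char_table_of_type n (rel : 'I_n -> 'I_n -> 'I_5)
  (cond : nat -> algC -> algC -> algC -> algC -> algC -> algC -> nat -> nat ->
          algC -> algC -> algC -> algC -> Prop) : Prop :=
  exists (Et : 'I_3 -> 'M[algC]_n) (k1 k2 r1 t1 r2 t2 : algC) (m1 m2 : nat),
  [/\ prim_idem_family (sym_adj rel) Et,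
      has_char_table (sym_adj rel) Et (sym_table k1 k2 r1 t1 r2 t2),
      [/\ \rank (Et J0) = 1%N, \rank (Et J1) = m1 & \rank (Et J2) = m2] &
  exists (E : 'I_5 -> 'M[algC]_n) (rho sigma tau omega : algC),
  [/\ prim_idem_family (adj rel) E,
      has_char_table (adj rel) E (scheme_table k1 k2 rho sigma tau omega),
      [/\ \rank (E I0) = 1%N, (2 * \rank (E I1))%N = m1, (2 * \rank (E I2))%N = m2,
          (2 * \rank (E I3))%N = m2 & (2 * \rank (E I4))%N = m1] &
      cond n k1 k2 r1 t1 r2 t2 m1 m2 rho sigma tau omega]].

(* Main.v *)
Require Import Defs.
From HB Require Import structures.
From mathcomp Require Import all_boot all_order all_algebra algC.
From mathcomp Require Import algnum ring zify.
Set Implicit Arguments. Unset Strict Implicit. Unset Printing Implicit Defensive.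
Import Order.TTheory GRing.Theory Num.Theory.
Local Open Scope ring_scope.


Section Eig.
Variable n : nat.

Lemma eigenvalue_tr (M : 'M[algC]_n) a : eigenvalue M^T a = eigenvalue M a.
Proof.
rewrite /eigenvalue /eigenspace -!mxrank_eq0 !mxrank_ker.
have -> : M^T - a%:M = (M - a%:M)^T by rewrite linearB /= tr_scalar_mx.
by rewrite mxrank_tr.
Qed.

Lemma eigen_colP (M : 'M[algC]_n) a :
  eigenvalue M a <-> exists x : 'cV_n, x != 0 /\ M *m x = a *: x.
Proof.
rewrite -eigenvalue_tr; split.
  case/eigenvalueP => v Hv nz; exists v^T; split.
    by apply: contra nz => /eqP H; apply/eqP; rewrite -[v]trmxK H trmx0.
  by rewrite -[M]trmxK -trmx_mul Hv linearZ.
case=> x [nz Hx]; apply/eigenvalueP; exists x^T.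
  by rewrite -trmx_mul Hx linearZ.
by apply: contra nz => /eqP H; apply/eqP; rewrite -[x]trmxK H trmx0.
Qed.

Lemma col_of_nz (E : 'M[algC]_n) (M : 'M[algC]_n) a :
  E != 0 -> M *m E = a *: E -> eigenvalue M a.
Proof.
case/matrix0Pn => i [j nz] HM; apply/eigen_colP.
exists (E *m delta_mx j 0); split.
  apply/matrix0Pn; exists i, 0; rewrite -colE mxE //.
by rewrite mulmxA HM scalemxAl.
Qed.

Lemma idem_aux r (L : 'M[algC]_(n, r)) (U : 'M[algC]_(r, n)) B C :
  B *m L = 1%:M -> U *m C = 1%:M -> (L *m U) *m (L *m U) = L *m U -> U *m L = 1%:M.
Proof.
move=> HB HC HA.
have E1 : B *m (L *m U *m (L *m U)) *m C = U *m L.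
  by rewrite !mulmxA HB mul1mx -!mulmxA HC mulmx1.
by rewrite -E1 HA !mulmxA HB mul1mx HC.
Qed.

Lemma trace_idem (A : 'M[algC]_n) : A *m A = A -> \tr A = (\rank A)%:R.
Proof.
move=> HA.
have /row_fullP [B HB] := col_base_full A.
have /row_freeP [C HC] := row_base_free A.
have HA' : (col_base A *m row_base A) *m (col_base A *m row_base A) = col_base A *m row_base A.
  by rewrite mulmx_base.
have HUL := idem_aux HB HC HA'.
by rewrite -{1}(mulmx_base A) mxtrace_mulC HUL mxtrace1.
Qed.

Lemma Aint_adj (R : 'I_n -> 'I_n -> bool) (X : 'M[algC]_n) a :
  X != 0 -> adj_mx R *m X = a *: X -> a \in Aint.
Proof.
move=> nz HX; have Ha := col_of_nz nz HX.
pose Mz : 'M[int]_n := \matrix_(x, y) (R x y)%:R.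
have HM : adj_mx R = map_mx intr Mz.
  by apply/matrixP => x y; rewrite !mxE /=; case: (R x y).
rewrite eigenvalue_root_char HM -map_char_poly in Ha.
apply: root_monic_Aint Ha _ _.
  exact: monic_map (char_poly_monic _).
by apply/polyOverP => i; rewrite coef_map /= rpred_int.
Qed.

End Eig.


Section Fam.
Variables (n m k : nat) (B : 'I_m -> 'M[algC]_n) (E : 'I_k -> 'M[algC]_n)
  (P : 'I_k -> 'I_m -> algC).
Hypotheses (HF : prim_idem_family B E) (HP : has_char_table B E P).

Lemma fam_nz j : E j != 0.
Proof. by case: HF => H _ _; case: (H j). Qed.
Lemma fam_idem j : E j *m E j = E j.
Proof. by case: HF => H _ _; case: (H j). Qed.
Lemma fam_orth j l : j != l -> E j *m E l = 0.
Proof. by case: HF => _ H _; apply: H. Qed.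
Lemma fam_sum : \sum_j E j = 1%:M.
Proof. by case: HF. Qed.
Lemma fam_span j : in_span B (E j).
Proof. by case: HF => H _ _; case: (H j). Qed.

Lemma fam_decomp (M : 'M[algC]_n) (th : 'I_k -> algC) :
  (forall j, M *m E j = th j *: E j) -> M = \sum_j th j *: E j.
Proof.
move=> HM; rewrite -[M]mulmx1 -fam_sum mulmx_sumr.
by apply: eq_bigr => j _; rewrite HM.
Qed.

Lemma fam_Ej_decomp (M : 'M[algC]_n) (th : 'I_k -> algC) l :
  (forall j, M *m E j = th j *: E j) -> E l *m M = th l *: E l.
Proof.
move=> HM; rewrite (fam_decomp HM) mulmx_sumr (bigD1 l) //= big1 ?addr0.
  by rewrite -scalemxAr fam_idem.
by move=> j Hj; rewrite -scalemxAr fam_orth 1?eq_sym // scaler0.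
Qed.

Lemma rows_distinct j l : j != l -> ~ (forall i, P j i = P l i).
Proof.
move=> Hjl Heq.
have [c Hc] := fam_span j.
have Hmul : forall l', E j *m E l' = (\sum_i c i * P l' i) *: E l'.
  move=> l'; rewrite Hc mulmx_suml scaler_suml; apply: eq_bigr => i _.
  by rewrite -scalemxAl HP scalerA.
have H1 : (\sum_i c i * P j i) = 1.
  have := Hmul j; rewrite fam_idem => /eqP.
  rewrite -subr_eq0 -{1}[E j]scale1r -scalerBl scaler_eq0 (negbTE (fam_nz j)) orbF.
  by rewrite subr_eq0 eq_sym => /eqP.
have := Hmul l; rewrite fam_orth // (eq_bigr (fun i => c i * P j i)).
  by rewrite H1 scale1r => /esym /eqP; rewrite (negbTE (fam_nz l)).
by move=> i _; rewrite Heq.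
Qed.

Lemma spectral (M : 'M[algC]_n) (th : 'I_k -> algC) :
  (forall j, M *m E j = th j *: E j) ->
  forall a, eigenvalue M a <-> exists j, a = th j.
Proof.
move=> HM a; split; last first.
  by case=> j ->; apply: (col_of_nz (fam_nz j)).
case/eigen_colP => x [nz Hx].
have : x = \sum_j E j *m x by rewrite -mulmx_suml fam_sum mul1mx.
have [j Hj] : exists j, E j *m x != 0.
  apply/existsP; apply: contraT; rewrite negb_exists => /forallP H.
  have Hx0 : \sum_j E j *m x = 0 by apply: big1 => j _; apply/eqP; have := H j; rewrite negbK.
  by rewrite -(mulmx_suml) fam_sum mul1mx in Hx0; rewrite Hx0 eqxx in nz.
move=> _; exists j.
have : E j *m (M *m x) = th j *: (E j *m x) by rewrite mulmxA (fam_Ej_decomp _ HM) scalemxAl.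
rewrite Hx -scalemxAr => /eqP; rewrite -subr_eq0 -scalerBl scaler_eq0 (negbTE Hj) orbF.
by rewrite subr_eq0 => /eqP.
Qed.

Lemma trace_decomp (M : 'M[algC]_n) (th : 'I_k -> algC) :
  (forall j, M *m E j = th j *: E j) -> \tr M = \sum_j th j * (\rank (E j))%:R.
Proof.
move=> HM; rewrite (fam_decomp HM) raddf_sum; apply: eq_bigr => j _.
by rewrite /= mxtraceZ trace_idem // fam_idem.
Qed.

Lemma eig_B i j : B i *m E j = P j i *: E j.
Proof. exact: HP. Qed.

Lemma eig_BB i i' j : (B i *m B i') *m E j = (P j i * P j i') *: E j.
Proof. by rewrite -mulmxA HP -scalemxAr HP scalerA mulrC. Qed.

Lemma eig_BD i i' j : (B i + B i') *m E j = (P j i + P j i') *: E j.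
Proof. by rewrite mulmxDl !HP scalerDl. Qed.

End Fam.


Lemma vI0 : (I0 : nat) = 0%N. Proof. by rewrite /I0 inordK. Qed.
Lemma vI1 : (I1 : nat) = 1%N. Proof. by rewrite /I1 inordK. Qed.
Lemma vI2 : (I2 : nat) = 2%N. Proof. by rewrite /I2 inordK. Qed.
Lemma vI3 : (I3 : nat) = 3%N. Proof. by rewrite /I3 inordK. Qed.
Lemma vI4 : (I4 : nat) = 4%N. Proof. by rewrite /I4 inordK. Qed.
Lemma vJ0 : (J0 : nat) = 0%N. Proof. by rewrite /J0 inordK. Qed.
Lemma vJ1 : (J1 : nat) = 1%N. Proof. by rewrite /J1 inordK. Qed.
Lemma vJ2 : (J2 : nat) = 2%N. Proof. by rewrite /J2 inordK. Qed.

Ltac tabE := rewrite /scheme_table /sym_table /tab_of ?vI0 ?vI1 ?vI2 ?vI3 ?vI4 ?vJ0 ?vJ1 ?vJ2; cbn [nth].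

Lemma I0E : I0 = ord0. Proof. by apply: ord_inj; rewrite vI0. Qed.

Lemma ord5_cases (i : 'I_5) : i = I0 \/ i = I1 \/ i = I2 \/ i = I3 \/ i = I4.
Proof.
case: i => [[|[|[|[|[|m]]]]] Hm].
- by left; apply: ord_inj; rewrite vI0.
- by right; left; apply: ord_inj; rewrite vI1.
- by do 2 right; left; apply: ord_inj; rewrite vI2.
- by do 3 right; left; apply: ord_inj; rewrite vI3.
- by do 4 right; apply: ord_inj; rewrite vI4.
- by [].
Qed.

Lemma sum_ord5 (F : 'I_5 -> algC) : \sum_i F i = F I0 + F I1 + F I2 + F I3 + F I4.
Proof.
rewrite !big_ord_recr big_ord0 /= add0r.
by congr (_ + _ + _ + _ + _); congr F; apply: ord_inj; rewrite /= ?vI0 ?vI1 ?vI2 ?vI3 ?vI4.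
Qed.

Section Scheme.
Variables (n : nat) (rel : 'I_n -> 'I_n -> 'I_5).
Hypotheses (Hs : is_assoc_scheme rel)
  (H12 : forall x y, Rel rel I1 x y = Rel rel I2 y x)
  (H34 : forall x y, Rel rel I3 x y = Rel rel I4 y x).

Lemma rel_diag x : rel x x = I0.
Proof. by case: Hs => _ H _ _; apply/eqP; rewrite I0E H. Qed.

Lemma adjE i x y : adj rel i x y = (rel x y == i)%:R.
Proof. by rewrite /adj /adj_mx mxE. Qed.

Lemma tr_adj i : i != I0 -> \tr (adj rel i) = 0.
Proof.
move=> Hi; rewrite /mxtrace big1 // => x _.
by rewrite adjE rel_diag eq_sym (negbTE Hi).
Qed.

Lemma tr_adj1 : \tr (adj rel I1 *m adj rel I1) = 0.
Proof.
rewrite /mxtrace big1 // => x _; rewrite mxE big1 // => z _.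
rewrite !adjE; have := H12 z x; rewrite /Rel => ->.
case: eqP => [->|]; last by rewrite mul0r.
suff /negbTE -> : I1 != I2 by rewrite mulr0.
by apply/eqP => /(congr1 (@nat_of_ord 5)); rewrite vI1 vI2.
Qed.

Lemma tr_adj3 : \tr (adj rel I3 *m adj rel I3) = 0.
Proof.
rewrite /mxtrace big1 // => x _; rewrite mxE big1 // => z _.
rewrite !adjE; have := H34 z x; rewrite /Rel => ->.
case: eqP => [->|]; last by rewrite mul0r.
suff /negbTE -> : I3 != I4 by rewrite mulr0.
by apply/eqP => /(congr1 (@nat_of_ord 5)); rewrite vI3 vI4.
Qed.

Lemma n_gt0 : (0 < n)%N.
Proof. by case: Hs => H _ _ _; case: (H ord0) => x _; case: n x => // [[]]. Qed.

Definition ones : 'rV[algC]_n := const_mx 1.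

Lemma ones_nz : ones != 0.
Proof.
apply/matrix0Pn; exists 0, (Ordinal n_gt0); rewrite mxE; exact: oner_neq0.
Qed.

Lemma colsum i : exists kap : nat,
  ones *m adj rel i = kap%:R *: ones /\ (exists x y, rel x y = i) /\
  forall y, kap = #|[set x | rel x y == i]|.
Proof.
case: Hs => Hne _ Htr Hint.
have [j Hj] := Htr i.
have [p Hp] := Hint j i ord0.
have Hc : forall y, #|[set x | rel x y == i]| = p.
  move=> y; rewrite -(Hp y y); last by rewrite rel_diag I0E.
  by apply: eq_card => z; rewrite !inE -Hj /Rel andbb.
exists p; split; last by split; [exact: Hne | move=> y; rewrite Hc].
apply/matrixP => a y; rewrite !mxE.
under eq_bigr do rewrite !mxE mul1r.
rewrite mulr1 -(Hc y) -sum1dep_card natr_sum [RHS]big_mkcond /=.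
by apply: eq_bigr => x _; rewrite /Rel; case: eqP.
Qed.

End Scheme.



Lemma conj_sum2 n (f : 'I_n -> 'I_n -> algC) :
  (\sum_a \sum_b f a b)^* = \sum_a \sum_b (f a b)^*.
Proof. rewrite rmorph_sum. apply: eq_bigr => a _. by rewrite rmorph_sum. Qed.

Lemma herm_real n (S X : 'M[algC]_n) r :
  (forall x y, S x y = S y x) -> (forall x y, (S x y)^* = S x y) ->
  X != 0 -> S *m X = r *: X -> r \is Num.real.
Proof.
move=> Hsym Hre /matrix0Pn [i [c Hic]] HX.
pose v (a : 'I_n) : algC := X a c.
have Hv : forall a, \sum_b S a b * v b = r * v a.
  by move=> a; have := congr1 (fun M : 'M[algC]_n => M a c) HX; rewrite !mxE.
pose q := \sum_a \sum_b (v a)^* * S a b * v b.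
pose N := \sum_a (v a)^* * v a.
have HqN : q = r * N.
  rewrite /q /N mulr_sumr; apply: eq_bigr => a _.
  rewrite mulrCA -Hv mulr_sumr; apply: eq_bigr => b _.
  by rewrite mulrA.
have Hq : q^* = q.
  rewrite /q conj_sum2 exchange_big /=; apply: eq_bigr => a _; apply: eq_bigr => b _.
  rewrite /v !rmorphM /= conjCK Hre (Hsym b a). ring.
have HN : N != 0.
  have Hge : forall a, 0 <= (v a)^* * v a by move=> a; rewrite mulrC -normCK exprn_ge0.
  rewrite /N psumr_eq0 //; apply/allPn; exists i; first exact: mem_index_enum.
  by rewrite mulrC -normCK expf_eq0 /= normr_eq0.
have HNr : N^* = N.
  by rewrite /N rmorph_sum /=; apply: eq_bigr => a _; rewrite /v rmorphM /= conjCK mulrC.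
rewrite CrealE; apply/eqP.
apply: (mulIf HN); have H2 : (r * N)^* = r * N by rewrite -HqN Hq.
by rewrite rmorphM /= HNr in H2.
Qed.



Section Main.
Variables (n : nat) (rel : 'I_n -> 'I_n -> 'I_5).
Hypotheses (Hs : is_assoc_scheme rel)
  (H12 : forall x y, Rel rel I1 x y = Rel rel I2 y x)
  (H34 : forall x y, Rel rel I3 x y = Rel rel I4 y x).
Variables (k1 k2 rho sigma tau omega : algC) (E : 'I_5 -> 'M[algC]_n).
Hypotheses (HF : prim_idem_family (adj rel) E)
  (HP : has_char_table (adj rel) E (scheme_table k1 k2 rho sigma tau omega)).
Local Notation P := (scheme_table k1 k2 rho sigma tau omega).

Lemma rownat l i : ones n *m E l != 0 -> exists kap : nat,
  [/\ P l i = kap%:R, ones n *m adj rel i = kap%:R *: ones n & (0 < kap)%N].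
Proof.
move=> Hnz; have [kap [Hk [[x [y Hxy]] Hc]]] := colsum Hs i.
exists kap; split => //; last first.
  by rewrite (Hc y); apply/card_gt0P; exists x; rewrite inE Hxy.
have : ones n *m adj rel i *m E l = P l i *: (ones n *m E l).
  by rewrite -mulmxA HP scalemxAr.
rewrite Hk -scalemxAl => /eqP; rewrite -subr_eq0 -scalerBl scaler_eq0 (negbTE Hnz) orbF.
by rewrite subr_eq0 => /eqP.
Qed.

Lemma neqI (i j : 'I_5) : (i : nat) != j -> i != j.
Proof. by apply: contra => /eqP ->. Qed.

Lemma ones_zero l : l != I0 -> ones n *m E l = 0.
Proof.
move=> Hl; apply/eqP; apply: contraT => Hnz; exfalso.
have Hc : forall i, (P l i)^* = P l i.
  by move=> i; have [kap [-> _ _]] := rownat i Hnz; rewrite conjC_nat.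
have h1 := Hc I1; have h3 := Hc I3; move: Hl h1 h3.
have [->|[->|[->|[->|->]]]] := ord5_cases l.
- by rewrite eqxx.
- move=> _; tabE => h1 h3.
  apply: (rows_distinct HF HP (j := I1) (l := I4)); first by apply: neqI; rewrite vI1 vI4.
  by move=> i; have [->|[->|[->|[->|->]]]] := ord5_cases i; tabE; rewrite ?h1 ?h3.
- move=> _; tabE => h1 h3.
  apply: (rows_distinct HF HP (j := I2) (l := I3)); first by apply: neqI; rewrite vI2 vI3.
  by move=> i; have [->|[->|[->|[->|->]]]] := ord5_cases i; tabE; rewrite ?h1 ?h3.
- move=> _; tabE; rewrite !conjCK => /esym h1 /esym h3.
  apply: (rows_distinct HF HP (j := I2) (l := I3)); first by apply: neqI; rewrite vI2 vI3.
  by move=> i; have [->|[->|[->|[->|->]]]] := ord5_cases i; tabE; rewrite ?h1 ?h3.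
- move=> _; tabE; rewrite !conjCK => /esym h1 /esym h3.
  apply: (rows_distinct HF HP (j := I1) (l := I4)); first by apply: neqI; rewrite vI1 vI4.
  by move=> i; have [->|[->|[->|[->|->]]]] := ord5_cases i; tabE; rewrite ?h1 ?h3.
Qed.

Lemma ones_E0 : ones n *m E I0 != 0.
Proof.
have : ones n = \sum_l ones n *m E l by rewrite -mulmx_sumr (fam_sum HF) mulmx1.
rewrite (bigD1 I0) //= big1 ?addr0; last by move=> l Hl; apply: ones_zero.
by move=> H; rewrite -H; exact: (ones_nz Hs).
Qed.

Lemma Jmx : \sum_i adj rel i = (const_mx 1 : 'cV[algC]_n) *m ones n.
Proof.
apply/matrixP => x y; rewrite summxE !mxE big_ord1 !mxE mulr1.
rewrite (bigD1 (rel x y)) //= big1 ?addr0; first by rewrite adjE eqxx.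
by move=> i Hi; rewrite adjE eq_sym (negbTE Hi).
Qed.

Lemma rowsum l : l != I0 -> \sum_i P l i = 0.
Proof.
move=> Hl.
have : (\sum_i adj rel i) *m E l = (\sum_i P l i) *: E l.
  by rewrite mulmx_suml scaler_suml; apply: eq_bigr => i _; rewrite HP.
rewrite Jmx -mulmxA ones_zero // mulmx0 => /eqP; rewrite eq_sym scaler_eq0.
by rewrite (negbTE (fam_nz HF l)) orbF => /eqP.
Qed.

Lemma P0nat i : exists kap : nat, P I0 i = kap%:R /\ (0 < kap)%N.
Proof. by have [kap [H1 _ H3]] := rownat i ones_E0; exists kap. Qed.

Lemma nsum : \sum_i P I0 i = n%:R.
Proof.
have H1 : ones n *m (\sum_i adj rel i) = (\sum_i P I0 i) *: ones n.
  rewrite mulmx_sumr scaler_suml; apply: eq_bigr => i _.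
  by have [kap [-> -> _]] := rownat i ones_E0.
have H2 : ones n *m (\sum_i adj rel i) = n%:R *: ones n.
  rewrite Jmx mulmxA; apply/matrixP => x y; rewrite !mxE big_ord1 !mxE mulr1.
  rewrite (eq_bigr (fun _ => 1)); last by move=> a _; rewrite !mxE mulr1.
  by rewrite sumr_const card_ord mulr1.
move: H1; rewrite H2 => /eqP; rewrite -subr_eq0 -scalerBl scaler_eq0 (negbTE (ones_nz Hs)) orbF.
by rewrite subr_eq0 => /eqP.
Qed.

Lemma aintP j i : P j i \in Aint.
Proof. exact: (Aint_adj (fam_nz HF j) (HP j i)). Qed.

Lemma tr_id : (n%:R : algC) = \sum_j (\rank (E j))%:R.
Proof.
rewrite -mxtrace1 (trace_decomp HF (th := fun _ => 1)).
  by apply: eq_bigr => j _; rewrite mul1r.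
by move=> j; rewrite mul1mx scale1r.
Qed.

Lemma tr_lin i : i != I0 -> 0 = \sum_j P j i * (\rank (E j))%:R.
Proof. by move=> Hi; rewrite -(trace_decomp HF (M := adj rel i) (th := fun j => P j i)) ?tr_adj // => j; apply: HP. Qed.

Lemma tr_quad1 : 0 = \sum_j (P j I1 * P j I1) * (\rank (E j))%:R.
Proof. by rewrite -(trace_decomp HF (M := adj rel I1 *m adj rel I1) (th := fun j => P j I1 * P j I1)) ?tr_adj1 // => j; apply: (eig_BB HP). Qed.

Lemma tr_quad3 : 0 = \sum_j (P j I3 * P j I3) * (\rank (E j))%:R.
Proof. by rewrite -(trace_decomp HF (M := adj rel I3 *m adj rel I3) (th := fun j => P j I3 * P j I3)) ?tr_adj3 // => j; apply: (eig_BB HP). Qed.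

End Main.


Lemma sqrtN_props (x : algC) : 0 < x ->
  let s := sqrtC (- x) in
  [/\ s ^+ 2 = - x, s^* = - s, s \isn't Num.real & 0 <= 'Im s].
Proof.
move=> Hx s.
have Hs2 : s ^+ 2 = - x by rewrite sqrtCK.
have Hnr : s \isn't Num.real.
  apply/negP => Hr; have := real_exprn_even_ge0 (n := 2%N) Hr isT.
  by rewrite Hs2 oppr_ge0 => /(lt_le_trans Hx); rewrite ltxx.
have HIm : 0 <= 'Im s by rewrite /s; apply: Im_rootC_ge0.
split => //.
have : (s^* - s) * (s^* + s) = 0.
  have -> : (s^* - s) * (s^* + s) = s^* ^+ 2 - s ^+ 2 by ring.
  by rewrite -rmorphXn Hs2 rmorphN /= conj_Creal ?subrr // gtr0_real.
move/eqP; rewrite mulf_eq0 => /orP [|].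
  by rewrite subr_eq0 -CrealE => H; rewrite H in Hnr.
by rewrite addr_eq0 => /eqP.
Qed.

Lemma five_distinct (c0 u w : algC) :
  c0 \is Num.real -> u \isn't Num.real -> w \isn't Num.real ->
  0 <= 'Im u -> 0 <= 'Im w -> u != w ->
  uniq [:: c0; (-1 + u) / 2; (-1 + w) / 2; (-1 - w) / 2; (-1 - u) / 2].
Proof.
move=> Hc Hu Hw Iu Iw Huw.
pose f (t : algC) := (-1 + t) / 2.
have finj : injective f.
  move=> a b; rewrite /f => H.
  have : 2 * ((-1 + a) / 2) + 1 = 2 * ((-1 + b) / 2) + 1 by rewrite H.
  have E1 : forall t : algC, 2 * ((-1 + t) / 2) + 1 = t by move=> t; field.
  by rewrite !E1.
have -> : [:: c0; (-1 + u) / 2; (-1 + w) / 2; (-1 - w) / 2; (-1 - u) / 2]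
    = map f [:: 2 * c0 + 1; u; w; - w; - u].
  by rewrite /= /f; congr [:: _, _, _, _ & _]; field.
rewrite (map_inj_uniq finj).
have Hc' : 2 * c0 + 1 \is Num.real by rewrite rpredD ?rpredM ?real1 // realn.
have neq_r : forall a v : algC, a \is Num.real -> v \isn't Num.real -> (a != v).
  by move=> a v Ha Hv; apply: contraNneq Hv => <-.
have Hu' : - u \isn't Num.real by rewrite rpredN.
have Hw' : - w \isn't Num.real by rewrite rpredN.
have neq_opp : forall v v' : algC, v \isn't Num.real -> 0 <= 'Im v -> 0 <= 'Im v' -> v != - v'.
  move=> v v' Hv Iv Iv'; apply: contraNneq Hv => Hvv.
  apply/Creal_ImP; apply: le_anti; rewrite Iv andbT.
  by rewrite Hvv raddfN /= oppr_le0.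
have neq_self : forall v : algC, v \isn't Num.real -> v != - v.
  move=> v Hv; apply: contraNneq Hv => Hvv.
  have : 2 * v = 0 by rewrite mulr2n mulrDl mul1r {2}Hvv subrr.
  move/eqP; rewrite mulf_eq0 pnatr_eq0 /= => /eqP ->; exact: real0.
rewrite /= !inE !negb_or.
rewrite (neq_r _ u) // (neq_r _ w) // (neq_r _ (-w)) // (neq_r _ (-u)) //.
rewrite Huw (neq_opp u w) // (neq_self u) // (neq_self w) // (neq_opp w u) //.
by rewrite eqr_opp eq_sym Huw.
Qed.

Lemma key_alg (k1 k2 r1 r2 e1 e2 n b z : algC) :
  k1 != 0 -> k2 != 0 -> k1 + k2 != 0 -> n != 0 ->
  n = 1 + k1 + k2 -> n = 1 + 2 * e1 + 2 * e2 ->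
  b * (2 * e2) = n * k1 -> z * (2 * e1) = n * k2 -> z = b ->
  k1 / 2 + e1 * r1 + e2 * r2 = 0 ->
  k1 ^+ 2 / 4 + e1 * r1 ^+ 2 / 2 + e2 * (r2 ^+ 2 - b) / 2 = 0 ->
  z = n /\ (r1 - 1 - r2) ^+ 2 + 2 * (r1 - 1 - r2) = k1 + k2.
Proof.
move=> nk1 nk2 nk12 nn hn1 hn2 hb hz hzb hl hq.
have h2 : (2 : algC) != 0 by rewrite pnatr_eq0.
have H12 : k1 + k2 = 2 * e1 + 2 * e2 by apply: (addrI 1); rewrite !addrA -hn1 -hn2.
have hsum : e1 + e2 = (k1 + k2) / 2 by rewrite H12; field.
have hbn : b = n.
  apply: (mulIf nk12).
  rewrite {1}H12.
  have -> : b * (2 * e1 + 2 * e2) = b * (2 * e2) + z * (2 * e1) by rewrite hzb; ring.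
  by rewrite hb hz; ring.
have he2 : e2 = k1 / 2.
  have H : n * (2 * e2) = n * k1 by rewrite -{1}hbn.
  apply: (mulfI (mulf_neq0 h2 nn)).
  have -> : 2 * n * e2 = n * (2 * e2) by ring.
  by rewrite H; field.
have he1 : e1 = k2 / 2 by rewrite -[e1]addr0 -(subrr e2) addrA hsum he2; field.
split; first by rewrite hzb.
have hr2 : r2 = -1 - k2 * r1 / k1.
  apply: (mulfI nk1); move: hl; rewrite he1 he2 => hl.
  have : k1 * r2 = 2 * (k1 / 2 + k2 / 2 * r1 + k1 / 2 * r2) - k1 - k2 * r1 by field.
  by rewrite hl => ->; field.
move: hq; rewrite he1 he2 hbn hr2 hn1 => hq.
have hQ : r1 ^+ 2 * (k1 + k2) + 2 * r1 * k1 - k1 ^+ 2 = 0.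
  have -> : r1 ^+ 2 * (k1 + k2) + 2 * r1 * k1 - k1 ^+ 2 =
     4 * k1 / k2 * (k1 ^+ 2 / 4 + k2 / 2 * r1 ^+ 2 / 2 +
       k1 / 2 * ((-1 - k2 * r1 / k1) ^+ 2 - (1 + k1 + k2)) / 2).
    by field; rewrite nk1 nk2.
  by rewrite hq mulr0.
apply/eqP; rewrite -subr_eq0; apply/eqP.
have -> : (r1 - 1 - (-1 - k2 * r1 / k1)) ^+ 2 + 2 * (r1 - 1 - (-1 - k2 * r1 / k1)) - (k1 + k2)
  = (k1 + k2) / k1 ^+ 2 * (r1 ^+ 2 * (k1 + k2) + 2 * r1 * k1 - k1 ^+ 2).
  by field.
by rewrite hQ mulr0.
Qed.

Lemma half_not_int : ((1 : algC) / 2) \isn't a Num.int.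
Proof.
apply/negP => /intrP [m Hm].
have H : ((2 * m)%:~R : algC) = 1%:~R.
  rewrite intrM -Hm /=.
  have -> : ((2 : int)%:~R : algC) = 2 by [].
  by field.
move/eqP: H; rewrite eqr_int => /eqP; lia.
Qed.



Lemma sym_real n (rel : 'I_n -> 'I_n -> 'I_5)
  (H12 : forall x y, Rel rel I1 x y = Rel rel I2 y x)
  (H34 : forall x y, Rel rel I3 x y = Rel rel I4 y x)
  (Et : 'I_3 -> 'M[algC]_n) k1 k2 r1 t1 r2 t2 :
  prim_idem_family (sym_adj rel) Et ->
  has_char_table (sym_adj rel) Et (sym_table k1 k2 r1 t1 r2 t2) ->
  [/\ r1 \is Num.real, t1 \is Num.real, r2 \is Num.real & t2 \is Num.real].
Proof.
move=> HFt HPt.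
have S1 : sym_adj rel J1 = adj rel I1 + adj rel I2.
  by rewrite /sym_adj; have -> : val J1 = 1%N by exact: vJ1.
have S2 : sym_adj rel J2 = adj rel I3 + adj rel I4.
  by rewrite /sym_adj; have -> : val J2 = 2%N by exact: vJ2.
have sym1 : forall x y, (adj rel I1 + adj rel I2) x y = (adj rel I1 + adj rel I2) y x.
  move=> x y; rewrite !mxE.
  have := H12 y x; have := H12 x y => -> ->; exact: addrC.
have sym2 : forall x y, (adj rel I3 + adj rel I4) x y = (adj rel I3 + adj rel I4) y x.
  move=> x y; rewrite !mxE.
  have := H34 y x; have := H34 x y => -> ->; exact: addrC.
have re1 : forall x y, ((adj rel I1 + adj rel I2) x y)^* = (adj rel I1 + adj rel I2) x y.
  by move=> x y; rewrite !mxE rmorphD /= !conjC_nat.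
have re2 : forall x y, ((adj rel I3 + adj rel I4) x y)^* = (adj rel I3 + adj rel I4) x y.
  by move=> x y; rewrite !mxE rmorphD /= !conjC_nat.
have h11 := HPt J1 J1; have h12 := HPt J1 J2; have h21 := HPt J2 J1; have h22 := HPt J2 J2.
move: h11 h12 h21 h22; rewrite S1 S2; tabE => h11 h12 h21 h22.
split.
- exact: herm_real sym1 re1 (fam_nz HFt J1) h11.
- exact: herm_real sym2 re2 (fam_nz HFt J1) h12.
- exact: herm_real sym1 re1 (fam_nz HFt J2) h21.
- exact: herm_real sym2 re2 (fam_nz HFt J2) h22.
Qed.

Lemma conclude n (M : 'M[algC]_n) m (B : 'I_m -> 'M[algC]_n) (E : 'I_5 -> 'M[algC]_n)
  (th : 'I_5 -> algC) :
  prim_idem_family B E -> (forall j, M *m E j = th j *: E j) ->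
  uniq [:: th I0; th I1; th I2; th I3; th I4] ->
  num_distinct_eigenvalues_eq M 5.
Proof.
move=> HF HM Hu; exists [:: th I0; th I1; th I2; th I3; th I4]; split => // a.
apply/idP/idP.
  move/(spectral HF HM) => [j ->].
  by have [->|[->|[->|[->|->]]]] := ord5_cases j; rewrite !inE eqxx ?orbT.
rewrite !inE => H; apply/(spectral HF HM).
by move: H => /orP [/eqP ->|/orP [/eqP ->|/orP [/eqP ->|/orP [/eqP ->|/eqP ->]]]]; eexists.
Qed.

Lemma contra_half (a b g u G n : algC) :
  a \in Aint -> b \in Aint -> g \in Aint ->
  a = (-1 + u) / 2 -> b = (-1 - u) / 2 -> u ^+ 2 = - n ->
  g = G / 2 -> G ^+ 2 + 2 * G = n - 1 -> False.
Proof.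
move=> Ha Hb Hg ha hb hu hg hG.
have HX : a * b - g - g ^+ 2 \in Aint by rewrite !rpredB ?rpredM ?rpredX.
have EX : a * b - g - g ^+ 2 = 1 / 2.
  rewrite ha hb hg.
  have -> : (-1 + u) / 2 * ((-1 - u) / 2) - G / 2 - (G / 2) ^+ 2
     = ((1 - u ^+ 2) - (G ^+ 2 + 2 * G)) / 4 by field.
  by rewrite hG hu; field.
rewrite EX in HX.
have : (1 : algC) / 2 \in Crat by rewrite rpred_div ?rpred1 ?rpred_nat.
move/Cint_rat_Aint => /(_ HX) H.
by move/negP: half_not_int; apply.
Qed.

Lemma M1E n (rel : 'I_n -> 'I_n -> 'I_5) :
  adj_mx (fun x y => Rel rel I1 x y || Rel rel I3 x y) = adj rel I1 + adj rel I3.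
Proof.
apply/matrixP => x y; rewrite !mxE /Rel.
case E1: (rel x y == I1); case E3: (rel x y == I3) => //=; rewrite ?addr0 ?add0r //.
by move: E1 E3 => /eqP -> /eqP /(congr1 (@nat_of_ord 5)); rewrite vI1 vI3.
Qed.

Lemma M2E n (rel : 'I_n -> 'I_n -> 'I_5) :
  adj_mx (fun x y => Rel rel I2 x y || Rel rel I4 x y) = adj rel I2 + adj rel I4.
Proof.
apply/matrixP => x y; rewrite !mxE /Rel.
case E1: (rel x y == I2); case E3: (rel x y == I4) => //=; rewrite ?addr0 ?add0r //.
by move: E1 E3 => /eqP -> /eqP /(congr1 (@nat_of_ord 5)); rewrite vI2 vI4.
Qed.



Lemma conjh1 (x : algC) : (x / 2)^* = x^* / 2.
Proof. by rewrite fmorph_div /= conjC_nat. Qed.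
Lemma conjh2 (x y : algC) : ((x + y) / 2)^* = (x^* + y^*) / 2.
Proof. by rewrite conjh1 rmorphD. Qed.

Lemma rev_uniq5 (c a b d e : algC) : uniq [:: c; a; b; d; e] -> uniq [:: c; e; d; b; a].
Proof.
move=> U; have : uniq (c :: rev [:: a; b; d; e]).
  by rewrite cons_uniq mem_rev rev_uniq -cons_uniq.
by [].
Qed.

Lemma type1_ok n (rel : 'I_n -> 'I_n -> 'I_5) :
  is_assoc_scheme rel ->
  (forall x y, Rel rel I1 x y = Rel rel I2 y x) ->
  (forall x y, Rel rel I3 x y = Rel rel I4 y x) ->
  char_table_of_type rel type1_cond ->
  num_distinct_eigenvalues_eq
    (adj_mx (fun x y => Rel rel I1 x y || Rel rel I3 x y)) 5 /\
  num_distinct_eigenvalues_eq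
    (adj_mx (fun x y => Rel rel I2 x y || Rel rel I4 x y)) 5.
Proof.
move=> Hs H12 H34.
case=> Et [k1] [k2] [r1] [t1] [r2] [t2] [m1] [m2] [HFt HPt [_ Hm1 Hm2]].
case=> E [rho] [sigma] [tau] [omega] [HF HP [R0 R1 R2 R3 R4] Hc].
rewrite /type1_cond in Hc; case: Hc => hrho hsig htau homg.
have [re_r1 re_t1 re_r2 re_t2] := sym_real H12 H34 HFt HPt.
have cr1 := conj_Creal re_r1; have ct1 := conj_Creal re_t1.
have cr2 := conj_Creal re_r2; have ct2 := conj_Creal re_t2.
have [kap1 [hk1 pk1]] := P0nat Hs HF HP I1; move: hk1; tabE => hk1.
have [kap3 [hk3 pk3]] := P0nat Hs HF HP I3; move: hk3; tabE => hk3.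
have h2 : (2 : algC) != 0 by rewrite pnatr_eq0.
have k1p : 0 < k1.
  have -> : k1 = 2 * kap1%:R by rewrite -hk1; field.
  by rewrite mulr_gt0 ?ltr0n.
have k2p : 0 < k2.
  have -> : k2 = 2 * kap3%:R by rewrite -hk3; field.
  by rewrite mulr_gt0 ?ltr0n.
have np : (0 : algC) < n%:R by rewrite ltr0n (n_gt0 Hs).
set e1 := (\rank (E I1))%:R : algC.
set e2 := (\rank (E I2))%:R : algC.
have rk1 : (0 < \rank (E I1))%N by rewrite lt0n mxrank_eq0 (fam_nz HF).
have rk2 : (0 < \rank (E I2))%N by rewrite lt0n mxrank_eq0 (fam_nz HF).
have rk4 : \rank (E I4) = \rank (E I1) by lia.
have rk3 : \rank (E I3) = \rank (E I2) by lia.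
have em1 : (m1%:R : algC) = 2 * e1 by rewrite -R1 natrM.
have em2 : (m2%:R : algC) = 2 * e2 by rewrite -R2 natrM.
have e1p : 0 < e1 by rewrite ltr0n.
have e2p : 0 < e2 by rewrite ltr0n.
set zz := n%:R * k2 / m1%:R.
set bb := n%:R * k1 / m2%:R.
have zzp : 0 < zz by rewrite /zz em1 divr_gt0 ?mulr_gt0.
have bbp : 0 < bb by rewrite /bb em2 divr_gt0 ?mulr_gt0.
move: htau hsig; rewrite -/zz -/bb.
have [u2 uc unr uim] := sqrtN_props zzp.
have [w2 wc wnr wim] := sqrtN_props bbp.
set u := sqrtC (- zz) in u2 uc unr uim *.
set w := sqrtC (- bb) in w2 wc wnr wim *.
move=> htau hsig.
have crho : rho^* = r1 / 2 by rewrite hrho conjh1 cr1.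
have ctau : tau^* = (t1 - u) / 2 by rewrite htau conjh2 ct1 uc.
have csig : sigma^* = (r2 - w) / 2 by rewrite hsig conjh2 cr2 wc.
have comg : omega^* = t2 / 2 by rewrite homg conjh1 ct2.
have ne10 : I1 != I0 by apply: neqI; rewrite vI1 vI0.
have ne20 : I2 != I0 by apply: neqI; rewrite vI2 vI0.
have ne30 : I3 != I0 by apply: neqI; rewrite vI3 vI0.
have hs1 : t1 = -1 - r1.
  have := rowsum Hs HF HP ne10; rewrite sum_ord5; tabE.
  rewrite crho ctau hrho htau => H; apply/eqP; rewrite -subr_eq0; apply/eqP.
  by rewrite -H; field.
have hs2 : t2 = -1 - r2.
  have := rowsum Hs HF HP ne20; rewrite sum_ord5; tabE.
  rewrite csig comg hsig homg => H; apply/eqP; rewrite -subr_eq0; apply/eqP.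
  by rewrite -H; field.
have hn1 : (n%:R : algC) = 1 + k1 + k2.
  by have := nsum Hs HF HP; rewrite sum_ord5; tabE => <-; field.
have hn2 : (n%:R : algC) = 1 + 2 * e1 + 2 * e2.
  by rewrite (tr_id HF) sum_ord5 R0 rk3 rk4 -/e1 -/e2; ring.
have c0r : k1 / 2 + k2 / 2 \is Num.real.
  by rewrite rpredD ?rpredM ?rpredV ?gtr0_real ?ltr0n.
have th1 : forall j, (adj rel I1 + adj rel I3) *m E j
    = (scheme_table k1 k2 rho sigma tau omega j I1 + scheme_table k1 k2 rho sigma tau omega j I3) *: E j.
  by move=> j; apply: (eig_BD HP).
have th2 : forall j, (adj rel I2 + adj rel I4) *m E j
    = (scheme_table k1 k2 rho sigma tau omega j I2 + scheme_table k1 k2 rho sigma tau omega j I4) *: E j.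
  by move=> j; apply: (eig_BD HP).
have Hneq : u != w.
  apply/eqP => huw.
  have hzb : zz = bb by apply: oppr_inj; rewrite -u2 -w2 huw.
  have nk1 : k1 != 0 by rewrite gt_eqF.
  have nk2 : k2 != 0 by rewrite gt_eqF.
  have nk12 : k1 + k2 != 0 by rewrite gt_eqF // addr_gt0.
  have nn : (n%:R : algC) != 0 by rewrite gt_eqF.
  have ne1 : e1 != 0 by rewrite gt_eqF.
  have ne2 : e2 != 0 by rewrite gt_eqF.
  have hb : bb * (2 * e2) = n%:R * k1 by rewrite /bb em2; field.
  have hz : zz * (2 * e1) = n%:R * k2 by rewrite /zz em1; field.
  have hl : k1 / 2 + e1 * r1 + e2 * r2 = 0.
    have := tr_lin Hs HF HP ne10; rewrite sum_ord5; tabE.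
    rewrite R0 rk3 rk4 -/e1 -/e2 crho csig hrho hsig => H.
    by apply: (etrans _ (esym H)); field.
  have hq : k1 ^+ 2 / 4 + e1 * r1 ^+ 2 / 2 + e2 * (r2 ^+ 2 - bb) / 2 = 0.
    have := tr_quad1 H12 HF HP; rewrite sum_ord5; tabE.
    rewrite R0 rk3 rk4 -/e1 -/e2 crho csig hrho hsig => H.
    have hbb : bb = - w ^+ 2 by rewrite w2 opprK.
    by rewrite hbb; apply: (etrans _ (esym H)); field.
  have [hzn hG] := key_alg nk1 nk2 nk12 nn hn1 hn2 hb hz hzb hl hq.
  have Ha := rpredD (aintP HF HP I1 I1) (aintP HF HP I1 I3).
  have Hb := rpredD (aintP HF HP I4 I1) (aintP HF HP I4 I3).
  have Hg := rpredD (aintP HF HP I1 I1) (aintP HF HP I2 I3).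
  move: Ha Hb Hg; tabE => Ha Hb Hg.
  apply: (contra_half Ha Hb Hg (u := u) (G := r1 - 1 - r2) (n := n%:R)).
  - by rewrite hrho htau hs1; field.
  - by rewrite crho ctau hs1; field.
  - by rewrite u2 hzn.
  - by rewrite hrho homg hs2; field.
  - by rewrite hG hn1; ring.
have U := five_distinct c0r unr wnr uim wim Hneq.
rewrite M1E M2E; split.
  apply: (conclude HF th1); tabE.
  rewrite crho ctau csig comg hrho htau hsig homg hs1 hs2.
  set L := [:: _; _; _; _; _].
  suff -> : L = [:: k1 / 2 + k2 / 2; (-1 + u) / 2; (-1 + w) / 2; (-1 - w) / 2; (-1 - u) / 2] by [].
  by rewrite /L; congr [:: _; _; _; _; _]; field.
apply: (conclude HF th2); tabE.
rewrite crho ctau csig comg hrho htau hsig homg hs1 hs2.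
set L := [:: _; _; _; _; _].
suff -> : L = [:: k1 / 2 + k2 / 2; (-1 - u) / 2; (-1 - w) / 2; (-1 + w) / 2; (-1 + u) / 2].
  exact: rev_uniq5.
by rewrite /L; congr [:: _; _; _; _; _]; field.
Qed.

Lemma type2_ok n (rel : 'I_n -> 'I_n -> 'I_5) :
  is_assoc_scheme rel ->
  (forall x y, Rel rel I1 x y = Rel rel I2 y x) ->
  (forall x y, Rel rel I3 x y = Rel rel I4 y x) ->
  char_table_of_type rel type2_cond ->
  num_distinct_eigenvalues_eq
    (adj_mx (fun x y => Rel rel I1 x y || Rel rel I3 x y)) 5 /\
  num_distinct_eigenvalues_eq
    (adj_mx (fun x y => Rel rel I2 x y || Rel rel I4 x y)) 5.
Proof.
move=> Hs H12 H34.
case=> Et [k1] [k2] [r1] [t1] [r2] [t2] [m1] [m2] [HFt HPt [_ Hm1 Hm2]].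
case=> E [rho] [sigma] [tau] [omega] [HF HP [R0 R1 R2 R3 R4] Hc].
rewrite /type2_cond in Hc; case: Hc => hrho hsig htau homg.
have [re_r1 re_t1 re_r2 re_t2] := sym_real H12 H34 HFt HPt.
have cr1 := conj_Creal re_r1; have ct1 := conj_Creal re_t1.
have cr2 := conj_Creal re_r2; have ct2 := conj_Creal re_t2.
have [kap1 [hk1 pk1]] := P0nat Hs HF HP I1; move: hk1; tabE => hk1.
have [kap3 [hk3 pk3]] := P0nat Hs HF HP I3; move: hk3; tabE => hk3.
have h2 : (2 : algC) != 0 by rewrite pnatr_eq0.
have k1p : 0 < k1.
  have -> : k1 = 2 * kap1%:R by rewrite -hk1; field.
  by rewrite mulr_gt0 ?ltr0n.
have k2p : 0 < k2.
  have -> : k2 = 2 * kap3%:R by rewrite -hk3; field.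
  by rewrite mulr_gt0 ?ltr0n.
have np : (0 : algC) < n%:R by rewrite ltr0n (n_gt0 Hs).
set e1 := (\rank (E I1))%:R : algC.
set e2 := (\rank (E I2))%:R : algC.
have rk1 : (0 < \rank (E I1))%N by rewrite lt0n mxrank_eq0 (fam_nz HF).
have rk2 : (0 < \rank (E I2))%N by rewrite lt0n mxrank_eq0 (fam_nz HF).
have rk4 : \rank (E I4) = \rank (E I1) by lia.
have rk3 : \rank (E I3) = \rank (E I2) by lia.
have em1 : (m1%:R : algC) = 2 * e1 by rewrite -R1 natrM.
have em2 : (m2%:R : algC) = 2 * e2 by rewrite -R2 natrM.
have e1p : 0 < e1 by rewrite ltr0n.
have e2p : 0 < e2 by rewrite ltr0n.
set zz := n%:R * k1 / m1%:R.
set bb := n%:R * k2 / m2%:R.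
have zzp : 0 < zz by rewrite /zz em1 divr_gt0 ?mulr_gt0.
have bbp : 0 < bb by rewrite /bb em2 divr_gt0 ?mulr_gt0.
move: hrho homg; rewrite -/zz -/bb.
have [u2 uc unr uim] := sqrtN_props zzp.
have [w2 wc wnr wim] := sqrtN_props bbp.
set u := sqrtC (- zz) in u2 uc unr uim *.
set w := sqrtC (- bb) in w2 wc wnr wim *.
move=> hrho homg.
have crho : rho^* = (r1 - u) / 2 by rewrite hrho conjh2 cr1 uc.
have ctau : tau^* = t1 / 2 by rewrite htau conjh1 ct1.
have csig : sigma^* = r2 / 2 by rewrite hsig conjh1 cr2.
have comg : omega^* = (t2 - w) / 2 by rewrite homg conjh2 ct2 wc.
have ne10 : I1 != I0 by apply: neqI; rewrite vI1 vI0.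
have ne20 : I2 != I0 by apply: neqI; rewrite vI2 vI0.
have ne30 : I3 != I0 by apply: neqI; rewrite vI3 vI0.
have hs1 : t1 = -1 - r1.
  have := rowsum Hs HF HP ne10; rewrite sum_ord5; tabE.
  rewrite crho ctau hrho htau => H; apply/eqP; rewrite -subr_eq0; apply/eqP.
  by rewrite -H; field.
have hs2 : t2 = -1 - r2.
  have := rowsum Hs HF HP ne20; rewrite sum_ord5; tabE.
  rewrite csig comg hsig homg => H; apply/eqP; rewrite -subr_eq0; apply/eqP.
  by rewrite -H; field.
have hn1 : (n%:R : algC) = 1 + k1 + k2.
  by have := nsum Hs HF HP; rewrite sum_ord5; tabE => <-; field.
have hn2 : (n%:R : algC) = 1 + 2 * e1 + 2 * e2.
  by rewrite (tr_id HF) sum_ord5 R0 rk3 rk4 -/e1 -/e2; ring.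
have c0r : k1 / 2 + k2 / 2 \is Num.real.
  by rewrite rpredD ?rpredM ?rpredV ?gtr0_real ?ltr0n.
have th1 : forall j, (adj rel I1 + adj rel I3) *m E j
    = (scheme_table k1 k2 rho sigma tau omega j I1 + scheme_table k1 k2 rho sigma tau omega j I3) *: E j.
  by move=> j; apply: (eig_BD HP).
have th2 : forall j, (adj rel I2 + adj rel I4) *m E j
    = (scheme_table k1 k2 rho sigma tau omega j I2 + scheme_table k1 k2 rho sigma tau omega j I4) *: E j.
  by move=> j; apply: (eig_BD HP).
have Hneq : u != w.
  apply/eqP => huw.
  have hzb : zz = bb by apply: oppr_inj; rewrite -u2 -w2 huw.
  have nk1 : k1 != 0 by rewrite gt_eqF.
  have nk2 : k2 != 0 by rewrite gt_eqF.
  have nk12 : k1 + k2 != 0 by rewrite gt_eqF // addr_gt0.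
  have nn : (n%:R : algC) != 0 by rewrite gt_eqF.
  have ne1 : e1 != 0 by rewrite gt_eqF.
  have ne2 : e2 != 0 by rewrite gt_eqF.
  have nk21 : k2 + k1 != 0 by rewrite gt_eqF // addr_gt0.
  have hn1' : (n%:R : algC) = 1 + k2 + k1 by rewrite hn1; ring.
  have hb : bb * (2 * e2) = n%:R * k2 by rewrite /bb em2; field.
  have hz : zz * (2 * e1) = n%:R * k1 by rewrite /zz em1; field.
  have hl : k2 / 2 + e1 * t1 + e2 * t2 = 0.
    have := tr_lin Hs HF HP ne30; rewrite sum_ord5; tabE.
    rewrite R0 rk3 rk4 -/e1 -/e2 ctau comg htau homg => H.
    by apply: (etrans _ (esym H)); field.
  have hq : k2 ^+ 2 / 4 + e1 * t1 ^+ 2 / 2 + e2 * (t2 ^+ 2 - bb) / 2 = 0.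
    have := tr_quad3 H34 HF HP; rewrite sum_ord5; tabE.
    rewrite R0 rk3 rk4 -/e1 -/e2 ctau comg htau homg => H.
    have hbb : bb = - w ^+ 2 by rewrite w2 opprK.
    by rewrite hbb; apply: (etrans _ (esym H)); field.
  have [hzn hG] := key_alg nk2 nk1 nk21 nn hn1' hn2 hb hz hzb hl hq.
  have Ha := rpredD (aintP HF HP I1 I1) (aintP HF HP I1 I3).
  have Hb := rpredD (aintP HF HP I4 I1) (aintP HF HP I4 I3).
  have Hg := rpredD (aintP HF HP I2 I1) (aintP HF HP I1 I3).
  move: Ha Hb Hg; tabE => Ha Hb Hg.
  apply: (contra_half Ha Hb Hg (u := u) (G := t1 - 1 - t2) (n := n%:R)).
  - by rewrite hrho htau hs1; field.
  - by rewrite crho ctau hs1; field.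
  - by rewrite u2 hzn.
  - by rewrite hsig htau hs2; field.
  - by rewrite hG hn1; ring.
have U := five_distinct c0r unr wnr uim wim Hneq.
rewrite M1E M2E; split.
  apply: (conclude HF th1); tabE.
  rewrite crho ctau csig comg hrho htau hsig homg hs1 hs2.
  set L := [:: _; _; _; _; _].
  suff -> : L = [:: k1 / 2 + k2 / 2; (-1 + u) / 2; (-1 + w) / 2; (-1 - w) / 2; (-1 - u) / 2] by [].
  by rewrite /L; congr [:: _; _; _; _; _]; field.
apply: (conclude HF th2); tabE.
rewrite crho ctau csig comg hrho htau hsig homg hs1 hs2.
set L := [:: _; _; _; _; _].
suff -> : L = [:: k1 / 2 + k2 / 2; (-1 - u) / 2; (-1 - w) / 2; (-1 + w) / 2; (-1 + u) / 2].
  exact: rev_uniq5.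
by rewrite /L; congr [:: _; _; _; _; _]; field.
Qed.


Unset Implicit Arguments.

Theorem proposition4p2 (n : nat) (rel : 'I_n -> 'I_n -> 'I_5) :
  is_assoc_scheme rel ->
  skew_symmetric rel ->
  (forall x y, Rel rel I1 x y = Rel rel I2 y x) ->   (* R_1^T = R_2 *)
  (forall x y, Rel rel I3 x y = Rel rel I4 y x) ->   (* R_3^T = R_4 *)
  char_table_of_type rel type1_cond \/ char_table_of_type rel type2_cond ->
  (* digraphs (X, R_1 ∪ R_3) and (X, R_2 ∪ R_4) *)
  num_distinct_eigenvalues_eq
    (adj_mx (fun x y => Rel rel I1 x y || Rel rel I3 x y)) 5 /\
  num_distinct_eigenvalues_eq
    (adj_mx (fun x y => Rel rel I2 x y || Rel rel I4 x y)) 5.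
Proof.
move=> Hs _ H12 H34 [H|H]; [exact: type1_ok | exact: type2_ok].
Qed.
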